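(* Let $q$ be a power of $2$ and $k\ge 1$ an integer, and let $S_{2k}=x+x^q+\cdots+x^{q^{2k-1}}\in\mathbb{F}_2[x]$. Let $L\in\mathbb{F}_{q^{3k}}[x]$ be a $2$-linearized polynomial (i.e. $L=\sum_i a_i x^{2^i}$ with $a_i\in\mathbb{F}_{q^{3k}}$) such that (i) $L$ permutes $\mathbb{F}_{q^k}$ (that is, $x\mapsto L(x)$ is a bijection $\mathbb{F}_{q^k}\to\mathbb{F}_{q^k}$), and (ii) $L(x)+L(x)^{q^{2k}}\equiv S_{2k}(x)^4 \pmod{x^{q^{3k}}-x}$. Then $L(x)+S_{2k}(x)^{q^k+3}$ is a permutation polynomial of $\mathbb{F}_{q^{3k}}$.
   Context: $\mathbb{F}_m$ denotes the finite field with $m$ elements. A polynomial $f\in\mathbb{F}_m[x]$ is a permutation polynomial of $\mathbb{F}_m$ if the induced map $x\mapsto f(x)$ is a bijection of $\mathbb{F}_m$. Here $\mathbb{F}_{q^k}\subset\mathbb{F}_{q^{3k}}$ is the subfield of order $q^k$. *)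

(* Defs.v *)
From HB Require Import structures.
From mathcomp Require Import all_boot all_order all_algebra all_field.
Set Implicit Arguments. Unset Strict Implicit. Unset Printing Implicit Defensive.
Import GRing.Theory.
Local Open Scope ring_scope.

(* The subfield of order m inside a finite field F (meaningful when
   F has order a power of m): the elements fixed by x |-> x^m. *)
Definition subfield_of_order (F : finFieldType) (m : nat) : pred F :=
  [pred x : F | x ^+ m == x].

Definition is_2linearized (F : finFieldType) (p : {poly F}) : Prop :=
  forall i : nat, p`_i != 0 -> exists j : nat, i = (2 ^ j)%N.

Definition is_perm_poly (F : finFieldType) (p : {poly F}) : Prop :=
  bijective (fun x : F => p.[x]).

Definition S_poly (F : finFieldType) (q n : nat) : {poly F} :=
  \sum_(i < n) 'X^(q ^ i).

(* Main.v *)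
Require Import Defs.
From HB Require Import structures.
From mathcomp Require Import all_boot all_order all_algebra all_field.
From mathcomp Require Import zify ring.
Import GRing.Theory.
Local Open Scope ring_scope.

Lemma frob2 (F : fieldType) (two0 : 2%:R = 0 :> F) n (x y : F) :
  (x + y) ^+ (2 ^ n) = x ^+ (2 ^ n) + y ^+ (2 ^ n).
Proof.
elim: n => [|n IH]; first by rewrite !expr1.
by rewrite expnS mulnC !exprM IH sqrrD -mulr_natr two0 mulr0 addr0.
Qed.

Lemma frob2_sum (F : fieldType) (two0 : 2%:R = 0 :> F) n m (G : 'I_m -> F) :
  (\sum_(i < m) G i) ^+ (2 ^ n) = \sum_(i < m) G i ^+ (2 ^ n).
Proof.
rewrite (big_morph (fun x : F => x ^+ (2 ^ n)) (id1 := 0) (op1 := +%R) (@frob2 F two0 n)) //.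
by rewrite expr0n expn_eq0.
Qed.

Lemma oppr2 (F : fieldType) (two0 : 2%:R = 0 :> F) (y : F) : - y = y.
Proof.
have: y + y = 0 by rewrite -mulr2n -mulr_natr two0 mulr0.
by move/eqP; rewrite addr_eq0 => /eqP <-.
Qed.

Lemma frob_inj (F : fieldType) (two0 : 2%:R = 0 :> F) n (x y : F) :
  x ^+ (2 ^ n) = y ^+ (2 ^ n) -> x = y.
Proof.
move=> h; have : (x + y) ^+ (2 ^ n) = 0.
  by rewrite frob2 // h -mulr2n -mulr_natr two0 mulr0.
move/eqP; rewrite expf_eq0 expn_gt0 /= addr_eq0 => /eqP ->.
by rewrite oppr2.
Qed.

Lemma hornerS (F : finFieldType) q n (x : F) :
  (S_poly F q n).[x] = \sum_(i < n) x ^+ (q ^ i).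
Proof. by rewrite /S_poly horner_sum; apply: eq_bigr => i _; rewrite hornerXn. Qed.

Lemma Sadd (F : finFieldType) (two0 : 2%:R = 0 :> F) e n (x y : F) :
  (S_poly F (2 ^ e) n).[x + y] = (S_poly F (2 ^ e) n).[x] + (S_poly F (2 ^ e) n).[y].
Proof.
rewrite !hornerS -big_split; apply: eq_bigr => i _.
by rewrite -expnM frob2.
Qed.

Lemma Ladd (F : finFieldType) (two0 : 2%:R = 0 :> F) (L : {poly F}) (x y : F) :
  is_2linearized L -> L.[x + y] = L.[x] + L.[y].
Proof.
move=> HL; rewrite !horner_coef -big_split; apply: eq_bigr => i _.
case: (eqVneq L`_(nat_of_ord i) 0) => [->|nz]; first by rewrite !mul0r /= addr0.
have [j ->] := HL _ nz.
by rewrite frob2 // mulrDr.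
Qed.

Lemma c2 (F : fieldType) (two0 : 2%:R = 0 :> F) (x y t : F) :
  x - y = 2%:R * t -> x = y.
Proof. by rewrite two0 mul0r => /eqP; rewrite subr_eq0 => /eqP. Qed.

Theorem theorem3p1 (F : finFieldType) (e k : nat) (L : {poly F}) :
  (0 < e)%N -> (1 <= k)%N ->
  #|F| = ((2 ^ e)%N ^ (3 * k))%N ->
  is_2linearized L ->
  (* (i) L permutes F_{q^k} *)
  {in subfield_of_order ((2 ^ e)%N ^ k), forall x,
      L.[x] \in subfield_of_order ((2 ^ e)%N ^ k)} ->
  {in subfield_of_order ((2 ^ e)%N ^ k) &, injective (fun x => L.[x])} ->
  (forall y, y \in subfield_of_order ((2 ^ e)%N ^ k) ->
     exists2 x, x \in subfield_of_order ((2 ^ e)%N ^ k) & L.[x] = y) ->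
  (* (ii) L + L^(q^(2k)) = S_{2k}^4 mod x^(q^(3k)) - x *)
  ('X^((2 ^ e)%N ^ (3 * k)) - 'X) %|
     (L + L ^+ ((2 ^ e)%N ^ (2 * k)) - (@S_poly F (2 ^ e)%N (2 * k)) ^+ 4) ->
  is_perm_poly (L + (@S_poly F (2 ^ e)%N (2 * k)) ^+ ((2 ^ e)%N ^ k + 3)).
Proof.
move=> e0 k1 cardF HL Lmap Linj Lsurj Hdiv.
have two0 : 2%:R = 0 :> F.
  have := expf_card (-1 : F); rewrite cardF.
  have -> : ((2 ^ e) ^ (3 * k) = 2 * 2 ^ (e * (3 * k)).-1)%N.
    by rewrite -expnM -expnS prednK // muln_gt0 e0 /=; lia.
  rewrite exprM sqrrN !expr1n => h.
  by rewrite mulr2n {2}h subrr.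
set q := (2 ^ e)%N in cardF Hdiv *.
set P := (q ^ k)%N in Linj *.
have Pq : P = (2 ^ (e * k))%N by rewrite /P /q expnM.
have P0 : (0 < P)%N by rewrite Pq expn_gt0.
have P3 : forall x : F, x ^+ P ^+ P ^+ P = x.
  move=> x; rewrite -!exprM -{2}(expf_card x) cardF /P -!expnD.
  by have -> : (k + (k + k) = 3 * k)%N by lia.
have PP : (q ^ (2 * k))%N = (P * P)%N by rewrite /P -expnD; have -> : (k + k = 2 * k)%N by lia.
have addP : forall x y : F, (x + y) ^+ P = x ^+ P + y ^+ P.
  by move=> x y; rewrite Pq frob2.
have injP : forall x y : F, x ^+ P = y ^+ P -> x = y.
  by move=> x y; rewrite Pq; apply: frob_inj.
have Hii : forall u, L.[u] + L.[u] ^+ P ^+ P = (S_poly F q (2 * k)).[u] ^+ 4.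
  move=> u; case/dvdpP: Hdiv => r Hr.
  have := congr1 (fun p => p.[u]) Hr.
  rewrite /= !(hornerM, hornerD, hornerN, hornerXn, hornerX, horner_exp).
  rewrite -cardF expf_card subrr mulr0 => /eqP; rewrite subr_eq0 => /eqP.
  by rewrite PP exprM.
have Str : forall x, (S_poly F q (2 * k)).[x] ^+ P ^+ P =
    (S_poly F q (2 * k)).[x] + (S_poly F q (2 * k)).[x] ^+ P.
  move=> x; rewrite hornerS.
  have -> : (2 * k = k + k)%N by lia.
  rewrite big_split_ord /=.
  have -> : \sum_(i < k) x ^+ (q ^ (rshift k i)) = (\sum_(i < k) x ^+ (q ^ i)) ^+ P.
    rewrite Pq frob2_sum //; apply: eq_bigr => i _.
    by rewrite -exprM /= expnD mulnC /q expnM.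
  set a := \sum_(i < k) _.
  rewrite !addP P3.
  by apply: (@c2 F two0 _ _ (- a ^+ P)); ring.
have lamf : forall x, let z := (S_poly F q (2 * k)).[x] in
   let f := L.[x] + z ^+ (P + 3) in
   f + f ^+ P ^+ P = z * (z ^+ P) ^+ 2 * z ^+ P ^+ P.
  move=> u /=; move: (Hii u) (Str u).
  set z := (S_poly _ _ _).[u]; set l := L.[u] => h1 h2.
  rewrite !addP ![z ^+ (P + 3) ^+ P]exprAC ![z ^+ P ^+ (P + 3) ^+ P]exprAC !exprD P3.
  have e1 : l ^+ P ^+ P = z ^+ 4 - l by rewrite -h1 addrAC subrr add0r.
  rewrite e1 h2.
  by apply: (@c2 F two0 _ _ (z ^+ 4 + 2%:R * z ^+ 3 * z ^+ P + z ^+ 2 * z ^+ P ^+ 2)); ring.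
have GN : forall z : F, let g := z * (z ^+ P) ^+ 2 * z ^+ P ^+ P in
    g * g ^+ P * g ^+ P ^+ P = (z * z ^+ P * z ^+ P ^+ P) ^+ 4.
  by move=> z /=; rewrite !exprMn !P3; ring.
apply: injF_bij => x y /= hf.
rewrite !(hornerD, horner_exp) in hf.
have hG := lamf x; rewrite /= hf lamf /= in hG.
set z := (S_poly F q (2 * k)).[x] in hG.
set w := (S_poly F q (2 * k)).[y] in hG.
have hN : w * w ^+ P * w ^+ P ^+ P = z * z ^+ P * z ^+ P ^+ P.
  apply: (@frob_inj F two0 2); rewrite -GN -GN /=.
  by rewrite hG.
have N0 : forall u : F, u * u ^+ P * u ^+ P ^+ P = 0 -> u = 0.
  by move=> u /eqP; rewrite !mulf_eq0 !expf_eq0 P0 /= !orbb => /eqP.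
have zw : z = w.
  case: (eqVneq (z * z ^+ P * z ^+ P ^+ P) 0) => h0.
    by rewrite (N0 _ h0) (N0 w) // hN.
  apply: injP; apply: (mulfI h0).
  transitivity (z * z ^+ P ^+ 2 * z ^+ P ^+ P); first ring.
  rewrite -hG -hN; ring.
have Lxy : L.[x] = L.[y] by move: hf; rewrite -/z -/w zw => /addIr.
set d := x - y.
have hx : x = d + y by rewrite subrK.
have Ld : L.[d] = 0.
  by apply: (@addIr _ L.[y]); rewrite add0r -Ladd // -hx.
have Sd : (S_poly F q (2 * k)).[d] = 0.
  apply: (@addIr _ w); rewrite add0r /w -Sadd // -hx; exact: zw.
have dPP : d ^+ P ^+ P = d.
  have m2 : (2 * k = ((2 * k).-1).+1)%N by lia.
  have h1 : (S_poly F q (2 * k)).[d] ^+ q = 0 by rewrite Sd expr0n expn_eq0.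
  rewrite hornerS /q frob2_sum // -/q m2 big_ord_recr /= in h1.
  rewrite hornerS m2 big_ord_recl /= in Sd.
  have e2 : \sum_(i < (2 * k).-1) d ^+ (q ^ bump 0 i) =
            \sum_(i < (2 * k).-1) d ^+ (q ^ i) ^+ q.
    by apply: eq_bigr => i _; rewrite -exprM -expnSr.
  rewrite e2 expn0 expr1 in Sd.
  rewrite -exprM -expnSr -m2 PP exprM in h1.
  move/eqP: Sd; rewrite addrC addr_eq0 => /eqP Sd.
  move/eqP: h1; rewrite addr_eq0 => /eqP.
  by rewrite Sd !oppr2 // => <-.
have dP : d ^+ P = d by rewrite -{2}(P3 d) dPP.
have d0 : d = 0.
  apply: Linj; rewrite ?inE /= ?dP ?expr0n ?eqxx //.
    by rewrite eqn0Ngt P0.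
  rewrite /= Ld horner_coef0; apply/esym/eqP.
  apply/negP => /negP /HL [j] /esym /eqP.
  by rewrite expn_eq0.
by apply/eqP; rewrite -subr_eq0 -/d d0.
Qed.
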